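(* Let $z>0$ be fixed, $\nu=n-\tfrac12$ with $n\in\mathbb N$, and $G_\nu(z)=zY_\nu'(z)/Y_\nu(z)$. Then for sufficiently large $\nu$, \[ -\nu+\frac{z^2}{2\nu}-\frac{z^2}{6\nu^2}+O\Big(\frac1{\nu^3}\Big)\le G_\nu(z)\le-\nu+\frac{z^2}{2\nu}+\frac{7z^2}{6\nu^2}+O\Big(\frac1{\nu^3}\Big)<0, \] where the $O(\nu^{-3})$ terms are bounded by $C\nu^{-3}$ with $C$ depending on $z$.
   Context: $Y_\nu$ denotes the Bessel function of the second kind of order $\nu$. *)

(* Defs.v *)
From Stdlib Require Import Reals Arith.
From Coquelicot Require Import Coquelicot.
Open Scope R_scope.

Definition Gamma_pos (x : R) : R :=
  RInt_gen (fun t => Rpower t (x - 1) * exp (- t)) (at_right 0) (Rbar_locally p_infty).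

Fixpoint poch (x : R) (m : nat) : R :=
  match m with
  | O => 1
  | S m' => poch x m' * (x + INR m')
  end.

(* Gamma on all of R minus the poles, by the functional equation
   Gamma(x) = Gamma(x+m) / (x (x+1) ... (x+m-1)) with m chosen so that x+m > 0
   (m = 0 when x > 0). *)
Definition Gamma (x : R) : R :=
  let m := Z.to_nat (up (- x)) in Gamma_pos (x + INR m) / poch x m.

Definition rgamma (x : R) : R := / Gamma x.

Definition BesselJ (mu x : R) : R :=
  Series (fun k : nat =>
    (-1) ^ k * rgamma (INR k + mu + 1) / INR (Factorial.fact k) * Rpower (x / 2) (2 * INR k + mu)).

Definition BesselY (nu x : R) : R :=
  (BesselJ nu x * cos (nu * PI) - BesselJ (- nu) x) / sin (nu * PI).

Definition G (nu z : R) : R := z * Derive (BesselY nu) z / BesselY nu z.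

(* Main.v *)
Require Import Defs.
From Stdlib Require Import Reals Lra Lia ZArith FunctionalExtensionality.
From Coquelicot Require Import Coquelicot.
Open Scope R_scope.

Lemma gfun_cont (c t : R) : 0 < t -> continuous (fun t => Rpower t c * exp (- t)) t.
Proof.
  intros Ht. apply (@ex_derive_continuous R_AbsRing R_NormedModule). unfold Rpower.
  auto_derive. lra.
Qed.

Lemma gfun_exRInt (c a b : R) : 0 < a -> 0 < b -> ex_RInt (fun t => Rpower t c * exp (- t)) a b.
Proof.
  intros Ha Hb. apply (@ex_RInt_continuous R_CompleteNormedModule). intros t Ht.
  apply gfun_cont. destruct Ht as [H1 _]. apply Rlt_le_trans with (2 := H1).
  apply Rmin_case; lra.
Qed.

Lemma gfun_nonneg (c t : R) : 0 <= Rpower t c * exp (- t).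
Proof. unfold Rpower. apply Rmult_le_pos; left; apply exp_pos. Qed.

Lemma ball_R (l e x : R) : Rabs (x - l) < e -> ball l e x.
Proof. intros H. change (Rabs (x - l) < e). exact H. Qed.

Lemma mono_RInt_gen (f : R -> R) (M : R) :
  (forall t, 0 < t -> continuous f t) ->
  (forall t, 0 < t -> 0 <= f t) ->
  (forall a b, 0 < a -> a < b -> RInt f a b <= M) ->
  exists L, is_RInt_gen f (at_right 0) (Rbar_locally p_infty) L /\ RInt f 1 2 <= L.
Proof.
  intros Hc Hp Hb.
  assert (Hex : forall a b, 0 < a -> 0 < b -> ex_RInt f a b).
  { intros a b Ha Hb'. apply (@ex_RInt_continuous R_CompleteNormedModule). intros t [Ht _]. apply Hc.
    apply Rlt_le_trans with (2 := Ht). apply Rmin_case; lra. }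
  assert (Hmon : forall a b, 0 < a -> a <= b -> 0 <= RInt f a b).
  { intros a b Ha Hab. apply RInt_ge_0; auto. apply Hex; lra.
    intros x Hx. apply Hp; lra. }
  set (E := fun r => exists a b, 0 < a /\ a < b /\ r = RInt f a b).
  assert (HE : bound E). { exists M. intros r [a [b [Ha [Hab ->]]]]. apply Hb; auto. }
  assert (HE2 : exists r, E r). { exists (RInt f 1 2). exists 1, 2. split; [lra|split;[lra|reflexivity]]. }
  destruct (completeness E HE HE2) as [L [HL1 HL2]].
  exists L. split.
  2:{ apply HL1. exists 1, 2. split; [lra|split;[lra|reflexivity]]. }
  apply filterlimi_lim_ext_loc with (f := fun ab : R * R => RInt f (fst ab) (snd ab)).
  - exists (fun a => 0 < a) (fun b => 0 < b).
    + exists (mkposreal 1 Rlt_0_1). intros y _ Hy. exact Hy.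
    + exists 0. intros; lra.
    + intros a b Ha Hb'. simpl. apply (@RInt_correct R_CompleteNormedModule). apply Hex; auto.
  - apply filterlim_locally. intros eps.
    assert (Hr : exists a0 b0, 0 < a0 /\ a0 < b0 /\ L - eps < RInt f a0 b0).
    { apply Classical_Prop.NNPP. intros Hn.
      assert (L <= L - eps).
      { apply HL2. intros r [a [b [Ha [Hab ->]]]].
        destruct (Rle_lt_dec (RInt f a b) (L - eps)) as [h|h]; auto.
        exfalso. apply Hn. exists a, b. auto. }
      destruct eps as [e He]; simpl in *; lra. }
    destruct Hr as [a0 [b0 [Ha0 [Hab0 Hr]]]].
    exists (fun a => 0 < a < a0) (fun b => b0 < b).
    + assert (Hpos : 0 < a0) by lra.
      exists (mkposreal a0 Hpos). intros y Hy Hy0. split; auto.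
      change (Rabs (y - 0) < a0) in Hy. rewrite Rminus_0_r in Hy.
      apply Rabs_def2 in Hy. lra.
    + exists b0. auto.
    + intros a b [Ha Ha'] Hb'. simpl. apply ball_R.
      assert (Hsplit : RInt f a b = RInt f a a0 + RInt f a0 b0 + RInt f b0 b).
      { rewrite <- (@RInt_Chasles R_CompleteNormedModule f a a0 b) by (apply Hex; lra).
        rewrite <- (@RInt_Chasles R_CompleteNormedModule f a0 b0 b) by (apply Hex; lra).
        change plus with Rplus. simpl. ring. }
      assert (Hup : RInt f a b <= L).
      { apply HL1. exists a, b. split; [lra|split;[lra|reflexivity]]. }
      assert (0 <= RInt f a a0) by (apply Hmon; lra).
      assert (0 <= RInt f b0 b) by (apply Hmon; lra).
      destruct eps as [e He]; simpl in *.
      apply Rabs_def1; lra.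
Qed.

Lemma atan_antider (t : R) : 0 < t -> is_derive (fun t => 2 * atan (sqrt t)) t (/ (sqrt t * (1 + t))).
Proof.
  intros Ht. auto_derive. lra.
  assert (Hs : 0 < sqrt t) by (apply sqrt_lt_R0; lra).
  assert (Hss : sqrt t * sqrt t = t) by (apply sqrt_sqrt; lra).
  replace (sqrt t * (sqrt t * 1)) with t by lra.
  field. split; lra.
Qed.

Lemma rpow_mhalf (t : R) : 0 < t -> Rpower t (1/2 - 1) = / sqrt t.
Proof.
  intros Ht. replace (1/2 - 1) with (- (/2)) by field.
  rewrite Rpower_Ropp, Rpower_sqrt; auto.
Qed.

Lemma gamma_half : exists L, 0 < L /\
  is_RInt_gen (fun t => Rpower t (1/2 - 1) * exp (- t)) (at_right 0) (Rbar_locally p_infty) L.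
Proof.
  set (f := fun t => Rpower t (1/2 - 1) * exp (- t)).
  destruct (mono_RInt_gen f (2 * PI)) as [L [HL HL2]].
  - intros t Ht. apply gfun_cont; auto.
  - intros t Ht. apply gfun_nonneg.
  - intros a b Ha Hab.
    set (g := fun t => / (sqrt t * (1 + t))).
    assert (Hg : is_RInt g a b (2 * atan (sqrt b) - 2 * atan (sqrt a))).
    { apply (is_RInt_derive (fun t => 2 * atan (sqrt t)) g).
      - intros x [Hx _]. apply atan_antider. apply Rlt_le_trans with (2 := Hx).
        apply Rmin_case; lra.
      - intros x [Hx _]. apply (@ex_derive_continuous R_AbsRing R_NormedModule).
        unfold g. auto_derive. assert (0 < x). apply Rlt_le_trans with (2 := Hx).
        apply Rmin_case; lra.
        assert (0 < sqrt x) by (apply sqrt_lt_R0; lra). repeat split; try lra.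
        apply Rgt_not_eq. apply Rmult_lt_0_compat; lra. }
    apply Rle_trans with (2 * atan (sqrt b) - 2 * atan (sqrt a)).
    + apply (is_RInt_le f g a b). lra.
      apply (@RInt_correct R_CompleteNormedModule). apply gfun_exRInt; lra. exact Hg.
      intros x Hx. unfold f, g. rewrite rpow_mhalf by lra.
      assert (0 < sqrt x) by (apply sqrt_lt_R0; lra).
      assert (1 + x < exp x) by (apply exp_ineq1; lra).
      rewrite exp_Ropp. rewrite Rinv_mult.
      apply Rmult_le_compat_l. left; apply Rinv_0_lt_compat; lra.
      apply Rinv_le_contravar; lra.
    + destruct (atan_bound (sqrt b)). destruct (atan_bound (sqrt a)). lra.
  - exists L. split; auto.
    apply Rlt_le_trans with (2 := HL2).
    apply Rlt_le_trans with (RInt (fun _ => exp (-2) / 2) 1 2).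
    + rewrite (@RInt_const R_CompleteNormedModule). change scal with Rmult. simpl.
      assert (0 < exp (-2)) by apply exp_pos. lra.
    + apply RInt_le. lra. apply (@ex_RInt_const R_CompleteNormedModule).
      apply gfun_exRInt; lra.
      intros x Hx. cbv beta. unfold f. rewrite rpow_mhalf by lra.
      assert (0 < sqrt x) by (apply sqrt_lt_R0; lra).
      assert (sqrt x <= 2). { rewrite <- (sqrt_square 2) by lra. apply sqrt_le_1_alt. lra. }
      assert (exp (-2) <= exp (-x)). { left. apply exp_increasing. lra. }
      unfold Rdiv. rewrite Rmult_comm.
      apply Rmult_le_compat. left; apply Rinv_0_lt_compat; lra. left; apply exp_pos.
      apply Rinv_le_contravar; lra. auto.
Qed.

Lemma ln_lt_self (u : R) : 0 < u -> ln u < u.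
Proof.
  intros Hu. assert (1 + u < exp u) by (apply exp_ineq1; lra).
  rewrite <- (ln_exp u) at 2. apply ln_increasing; auto; lra.
Qed.

Lemma hlim0 (x : R) : 0 < x ->
  filterlim (fun t => - (exp (x * ln t) * exp (- t))) (at_right 0) (locally 0).
Proof.
  intros Hx. apply filterlim_locally. intros [e He]. simpl.
  set (d := exp (ln e / x)).
  assert (Hd : 0 < d) by apply exp_pos.
  exists (mkposreal d Hd). intros t Ht Ht0. simpl in Ht.
  change (Rabs (t - 0) < d) in Ht. rewrite Rminus_0_r, Rabs_pos_eq in Ht by lra.
  apply ball_R. rewrite Rminus_0_r, Rabs_Ropp, Rabs_pos_eq.
  2:{ left; apply Rmult_lt_0_compat; apply exp_pos. }
  assert (exp (- t) <= 1). { rewrite <- exp_0. left. apply exp_increasing. lra. }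
  assert (exp (x * ln t) < e).
  { rewrite <- (exp_ln e) by auto. apply exp_increasing.
    assert (ln t < ln e / x). { unfold d in Ht. rewrite <- (ln_exp (ln e / x)). apply ln_increasing; lra. }
    apply Rmult_lt_reg_r with (/ x). apply Rinv_0_lt_compat; auto.
    replace (x * ln t * / x) with (ln t) by (field; lra). exact H0. }
  assert (0 < exp (x * ln t)) by apply exp_pos.
  apply Rle_lt_trans with (exp (x * ln t) * 1). apply Rmult_le_compat_l; lra. lra.
Qed.

Lemma hliminf (x : R) : 0 < x ->
  filterlim (fun t => - (exp (x * ln t) * exp (- t))) (Rbar_locally p_infty) (locally 0).
Proof.
  intros Hx. apply filterlim_locally. intros [e He]. simpl.
  set (K := 2 * x + Rabs (ln e) + 1).
  exists (K * K). intros t Ht.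
  assert (HK : 0 < K) by (unfold K; assert (0 <= Rabs (ln e)) by apply Rabs_pos; lra).
  assert (Ht0 : 0 < t) by nra.
  assert (Hs : K < sqrt t).
  { rewrite <- (sqrt_square K) by lra. apply sqrt_lt_1_alt. nra. }
  assert (Hss : sqrt t * sqrt t = t) by (apply sqrt_sqrt; lra).
  assert (Hln : ln t = 2 * ln (sqrt t)).
  { rewrite <- Hss at 1. rewrite ln_mult by lra. ring. }
  assert (ln (sqrt t) < sqrt t) by (apply ln_lt_self; lra).
  apply ball_R. rewrite Rminus_0_r, Rabs_Ropp, Rabs_pos_eq.
  2:{ left; apply Rmult_lt_0_compat; apply exp_pos. }
  rewrite <- exp_plus. rewrite <- (exp_ln e) by auto. apply exp_increasing.
  rewrite Hln.
  assert (Rabs (ln e) >= - ln e) by (rewrite <- Rabs_Ropp; apply Rle_ge, Rle_abs).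
  unfold K in Hs.
  set (s := sqrt t) in *.
  assert (x * (2 * ln s) <= 2 * x * s) by nra.
  assert (s * (s - 2 * x) >= 1 * (s - 2 * x)).
  { apply Rle_ge, Rmult_le_compat_r. assert (0 <= Rabs (ln e)) by apply Rabs_pos. lra.
    assert (0 <= Rabs (ln e)) by apply Rabs_pos. lra. }
  rewrite <- Hss. nra.
Qed.

Lemma gamma_step (x l : R) : 0 < x ->
  is_RInt_gen (fun t => Rpower t (x - 1) * exp (- t)) (at_right 0) (Rbar_locally p_infty) l ->
  is_RInt_gen (fun t => Rpower t (x + 1 - 1) * exp (- t)) (at_right 0) (Rbar_locally p_infty) (x * l).
Proof.
  intros Hx Hl.
  set (h := fun t => - (exp (x * ln t) * exp (- t))).
  set (d := fun t => - (x / t * exp (x * ln t) * exp (- t)) + exp (x * ln t) * exp (- t)).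
  assert (Hd : forall t, 0 < t -> is_derive h t (d t)).
  { intros t Ht. unfold h, d. auto_derive. lra. field. lra. }
  assert (HDd : forall t, 0 < t -> Derive h t = d t).
  { intros t Ht. apply is_derive_unique. auto. }
  assert (Hpos : filter_prod (at_right 0) (Rbar_locally p_infty) (fun ab : R * R => 0 < fst ab /\ 0 < snd ab)).
  { exists (fun a => 0 < a) (fun b => 0 < b).
    + exists (mkposreal 1 Rlt_0_1). intros y _ Hy. exact Hy.
    + exists 0. intros; lra.
    + intros a b Ha Hb. simpl. auto. }
  assert (HD : is_RInt_gen (Derive h) (at_right 0) (Rbar_locally p_infty) (0 - 0)).
  { apply is_RInt_gen_Derive.
    - eapply filter_imp. 2: exact Hpos. intros [a b] [Ha Hb] t [Ht _]. simpl in *.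
      exists (d t). apply Hd. apply Rlt_le_trans with (2 := Ht). apply Rmin_case; lra.
    - eapply filter_imp. 2: exact Hpos. intros [a b] [Ha Hb] t [Ht _]. simpl in *.
      assert (Ht0 : 0 < t). { apply Rlt_le_trans with (2 := Ht). apply Rmin_case; lra. }
      apply continuous_ext_loc with d.
      + exists (mkposreal t Ht0). intros y Hy. change (Rabs (y - t) < t) in Hy.
        apply Rabs_def2 in Hy. symmetry. apply HDd. lra.
      + apply (@ex_derive_continuous R_AbsRing R_NormedModule). unfold d. auto_derive. lra.
    - apply hlim0; auto.
    - apply hliminf; auto. }
  assert (HS := is_RInt_gen_scal _ x _ Hl).
  assert (HP := is_RInt_gen_plus _ _ _ _ HD HS).
  replace (x * l) with (plus (0 - 0) (scal x l)).
  2:{ change plus with Rplus. change scal with Rmult. simpl. ring. }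
  eapply is_RInt_gen_ext. 2: exact HP.
  eapply filter_imp. 2: exact Hpos. intros [a b] [Ha Hb] t [Ht _]. simpl in *.
  assert (Ht0 : 0 < t). { apply Rlt_trans with (2 := Ht). apply Rmin_case; lra. }
  rewrite HDd by auto. unfold d. change plus with Rplus. change scal with Rmult. simpl.
  unfold Rpower. replace (x + 1 - 1) with x by ring.
  replace ((x - 1) * ln t) with (x * ln t + - ln t) by ring.
  rewrite exp_plus, exp_Ropp. rewrite exp_Ropp, exp_ln by auto. field. split; [apply Rgt_not_eq, exp_pos | lra].
Qed.


Definition LG := Gamma_pos (1/2).

Lemma LG_pos : 0 < LG.
Proof.
  destruct gamma_half as [L [HL H]]. unfold LG, Gamma_pos.
  rewrite (is_RInt_gen_unique _ _ H). auto.
Qed.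

Lemma Gpos_val (j : nat) : Gamma_pos (1/2 + INR j) = LG * poch (1/2) j.
Proof.
  destruct gamma_half as [L [HL H]].
  assert (HLG : LG = L) by (unfold LG, Gamma_pos; apply (is_RInt_gen_unique _ _ H)).
  assert (Hj : is_RInt_gen (fun t => Rpower t (1/2 + INR j - 1) * exp (- t)) (at_right 0) (Rbar_locally p_infty) (L * poch (1/2) j)).
  { induction j as [|j IH].
    - simpl. replace (1/2 + 0 - 1) with (1/2 - 1) by ring. rewrite Rmult_1_r. exact H.
    - replace (1/2 + INR (S j) - 1) with ((1/2 + INR j) + 1 - 1) by (rewrite S_INR; ring).
      simpl. replace (L * (poch (1/2) j * (1/2 + INR j))) with ((1/2 + INR j) * (L * poch (1/2) j)) by ring.
      apply gamma_step; auto. assert (0 <= INR j) by apply pos_INR. lra. }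
  unfold Gamma_pos. rewrite (is_RInt_gen_unique _ _ Hj). rewrite HLG. reflexivity.
Qed.

Lemma poch_shift (x : R) (m : nat) : poch x (S m) = x * poch (x + 1) m.
Proof.
  induction m as [|m IH].
  - simpl. ring.
  - change (poch x (S (S m))) with (poch x (S m) * (x + INR (S m))).
    rewrite IH. change (poch (x+1) (S m)) with (poch (x+1) m * (x+1+INR m)). rewrite S_INR. ring.
Qed.

Lemma Gam_pos_nat (j : nat) : Gamma (1/2 + INR j) = LG * poch (1/2) j.
Proof.
  unfold Gamma.
  assert (Hup : up (- (1/2 + INR j)) = (- Z.of_nat j)%Z).
  { symmetry. apply tech_up; rewrite opp_IZR, <- INR_IZR_INZ; lra. }
  rewrite Hup. replace (Z.to_nat (- Z.of_nat j)) with 0%nat by lia.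
  simpl. rewrite Rplus_0_r, Rdiv_1_r. apply Gpos_val.
Qed.

Lemma Gam_neg_nat (m : nat) : Gamma (1/2 - INR (S m)) = LG / poch (1/2 - INR (S m)) (S m).
Proof.
  unfold Gamma.
  assert (Hup : up (- (1/2 - INR (S m))) = Z.of_nat (S m)).
  { symmetry. apply tech_up; rewrite <- INR_IZR_INZ; lra. }
  rewrite Hup. rewrite Znat.Nat2Z.id. replace (1/2 - INR (S m) + INR (S m)) with (1/2) by ring.
  reflexivity.
Qed.

Definition hx (i : Z) : R := 1/2 + IZR i.

Lemma hx_neq0 (i : Z) : hx i <> 0.
Proof.
  unfold hx. intros H.
  assert (IZR (2 * i + 1) = 0) by (rewrite plus_IZR, mult_IZR; simpl; lra).
  apply eq_IZR_R0 in H0. lia.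
Qed.

Lemma Z_cases (i : Z) : (exists j : nat, IZR i = INR j) \/ (exists m : nat, IZR i = - INR (S m)).
Proof.
  destruct (Z_le_gt_dec 0 i).
  - left. exists (Z.to_nat i). rewrite INR_IZR_INZ, Z2Nat.id; auto.
  - right. exists (Z.to_nat (- i - 1)). rewrite INR_IZR_INZ.
    replace (Z.of_nat (S (Z.to_nat (- i - 1)))) with (- i)%Z by lia.
    rewrite opp_IZR. ring.
Qed.

Lemma poch_hx_neq0 (i : Z) (m : nat) : poch (hx i) m <> 0.
Proof.
  induction m as [|m IH]; simpl. lra.
  apply Rmult_integral_contrapositive_currified; auto.
  replace (hx i + INR m) with (hx (i + Z.of_nat m)).
  apply hx_neq0. unfold hx. rewrite plus_IZR, <- INR_IZR_INZ. ring.
Qed.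

Lemma poch_half_neq0 (j : nat) : poch (1/2) j <> 0.
Proof. replace (1/2) with (hx 0) by (unfold hx; simpl; ring). apply poch_hx_neq0. Qed.

Lemma Gamma_hx_neq0 (i : Z) : Gamma (hx i) <> 0.
Proof.
  assert (LG_pos' := LG_pos).
  destruct (Z_cases i) as [[j Hj]|[m Hm]]; unfold hx; rewrite Hj || rewrite Hm.
  - rewrite Gam_pos_nat. apply Rmult_integral_contrapositive_currified. lra. apply poch_half_neq0.
  - replace (1/2 + - INR (S m)) with (1/2 - INR (S m)) by ring. rewrite Gam_neg_nat.
    assert (Hp : poch (1/2 - INR (S m)) (S m) <> 0).
    { replace (1/2 - INR (S m)) with (hx (- Z.of_nat (S m))).
      apply poch_hx_neq0. unfold hx. rewrite opp_IZR, <- INR_IZR_INZ. ring. }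
    unfold Rdiv. apply Rmult_integral_contrapositive_currified. lra.
    apply Rinv_neq_0_compat. exact Hp.
Qed.

Lemma Gamma_hx_rec (i : Z) : Gamma (hx i + 1) = hx i * Gamma (hx i).
Proof.
  destruct (Z_cases i) as [[j Hj]|[m Hm]]; unfold hx; rewrite Hj || rewrite Hm.
  - replace (1/2 + INR j + 1) with (1/2 + INR (S j)) by (rewrite S_INR; ring).
    rewrite !Gam_pos_nat. simpl. ring.
  - replace (1/2 + - INR (S m)) with (1/2 - INR (S m)) by ring. rewrite Gam_neg_nat.
    assert (Hp : poch (1/2 - INR (S m)) (S m) <> 0).
    { replace (1/2 - INR (S m)) with (hx (- Z.of_nat (S m))).
      apply poch_hx_neq0. unfold hx. rewrite opp_IZR, <- INR_IZR_INZ. ring. }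
    destruct m as [|m].
    + replace (1/2 - INR 1 + 1) with (1/2 + INR 0) by (simpl; ring).
      rewrite Gam_pos_nat. simpl in *. field.
    + replace (1/2 - INR (S (S m)) + 1) with (1/2 - INR (S m)) by (rewrite (S_INR (S m)); ring).
      rewrite Gam_neg_nat. rewrite (poch_shift (1/2 - INR (S (S m))) (S m)) in *.
      replace (1/2 - INR (S (S m)) + 1) with (1/2 - INR (S m)) in * by (rewrite (S_INR (S m)); ring).
      assert (H1 : 1/2 - INR (S (S m)) <> 0) by (intros H; apply Hp; rewrite H; ring).
      assert (H2 : poch (1/2 - INR (S m)) (S m) <> 0) by (intros H; apply Hp; rewrite H; ring).
      field. split; auto. intros H; apply H1; lra.
Qed.


Definition nuf (n : nat) : R := INR n - 1/2.
Definition aa (n k : nat) : R := (-1) ^ k * rgamma (INR k + - nuf n + 1) / INR (fact k).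
Definition xk (n k : nat) : R := INR k + - nuf n + 1.

Lemma xk_hx (n k : nat) : xk n k = hx (Z.of_nat k - Z.of_nat n + 1).
Proof.
  unfold xk, hx, nuf. rewrite plus_IZR, minus_IZR, <- !INR_IZR_INZ. simpl. ring.
Qed.

Lemma xk_neq0 n k : xk n k <> 0.
Proof. rewrite xk_hx. apply hx_neq0. Qed.

Lemma hx_abs (i : Z) : 1/2 <= Rabs (hx i).
Proof.
  unfold hx. destruct (Z_le_gt_dec 0 i) as [H|H].
  - apply IZR_le in H. rewrite Rabs_pos_eq; lra.
  - assert (H' : (i <= -1)%Z) by lia. apply IZR_le in H'.
    rewrite Rabs_left; lra.
Qed.

Lemma xk_abs n k : 1/2 <= Rabs (xk n k).
Proof. rewrite xk_hx. apply hx_abs. Qed.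

Lemma aa_neq0 n k : aa n k <> 0.
Proof.
  unfold aa, rgamma. unfold Rdiv.
  apply Rmult_integral_contrapositive_currified.
  apply Rmult_integral_contrapositive_currified.
  apply pow_nonzero. lra.
  apply Rinv_neq_0_compat. fold (xk n k). rewrite xk_hx. apply Gamma_hx_neq0.
  apply Rinv_neq_0_compat. apply not_0_INR. apply fact_neq_0.
Qed.

Lemma aa_rec n k : aa n (S k) = - aa n k / (xk n k * INR (S k)).
Proof.
  unfold aa, rgamma.
  replace (INR (S k) + - nuf n + 1) with (xk n k + 1) by (unfold xk; rewrite S_INR; ring).
  rewrite xk_hx, Gamma_hx_rec. rewrite <- xk_hx.
  fold (xk n k). rewrite xk_hx.
  assert (H1 := Gamma_hx_neq0 (Z.of_nat k - Z.of_nat n + 1)).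
  assert (H2 := hx_neq0 (Z.of_nat k - Z.of_nat n + 1)).
  rewrite <- xk_hx in *.
  change (fact (S k)) with (S k * fact k)%nat. rewrite mult_INR.
  assert (H3 : INR (fact k) <> 0) by (apply not_0_INR, fact_neq_0).
  assert (H4 : INR (S k) <> 0) by (apply not_0_INR; lia).
  simpl pow. field. repeat split; auto.
Qed.

Lemma aa_radius n : CV_radius (aa n) = p_infty.
Proof.
  apply CV_radius_infinite_DAlembert. apply aa_neq0.
  apply is_lim_seq_le_le with (u := fun _ => 0) (w := fun k => 2 * / INR (S k)).
  - intros k. split. apply Rabs_pos.
    rewrite aa_rec. assert (H1 := aa_neq0 n k). assert (H2 := xk_neq0 n k).
    assert (H3 : 0 < INR (S k)) by (apply lt_0_INR; lia).
    replace (- aa n k / (xk n k * INR (S k)) / aa n k) with (- / (xk n k * INR (S k))) by (field; lra).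
    rewrite Rabs_Ropp, Rabs_inv, Rabs_mult, (Rabs_pos_eq (INR (S k))) by lra.
    assert (H4 := xk_abs n k).
    rewrite <- (Rinv_inv 2). rewrite <- Rinv_mult.
    apply Rinv_le_contravar. apply Rmult_lt_0_compat; lra. nra.
  - apply is_lim_seq_const.
  - replace (Finite 0) with (Rbar_mult 2 (Rbar_inv p_infty)) by (simpl; f_equal; ring).
    apply is_lim_seq_scal_l. apply is_lim_seq_inv. 2: discriminate.
    apply (is_lim_seq_incr_1 INR). apply is_lim_seq_INR.
Qed.

Lemma trig_nu n : cos (nuf n * PI) = 0 /\ sin (nuf n * PI) <> 0.
Proof.
  assert (H : cos (nuf n * PI) = 0 /\ (sin (nuf n * PI) = 1 \/ sin (nuf n * PI) = -1)).
  { induction n as [|n [IH1 IH2]].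
    - unfold nuf. simpl. replace ((0 - 1/2) * PI) with (- (PI/2)) by field.
      rewrite cos_neg, sin_neg, cos_PI2, sin_PI2. split; auto.
    - unfold nuf in *. rewrite S_INR.
      replace ((INR n + 1 - 1/2) * PI) with ((INR n - 1/2) * PI + PI) by ring.
      rewrite neg_cos, neg_sin. split. lra. destruct IH2 as [h|h]; rewrite h; [right|left]; ring. }
  destruct H as [H1 H2]. split; auto. destruct H2 as [h|h]; rewrite h; lra.
Qed.

Lemma J_repr n x : 0 < x ->
  BesselJ (- nuf n) x = exp (- nuf n * ln (x/2)) * PSeries (aa n) ((x/2)^2).
Proof.
  intros Hx. unfold BesselJ, PSeries. rewrite <- Series_scal_l. apply Series_ext. intro k.
  unfold aa. replace (2 * INR k + - nuf n) with (INR (2 * k) + - nuf n) by (rewrite mult_INR; simpl; ring).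
  rewrite Rpower_plus, Rpower_pow by lra. rewrite pow_mult. unfold Rpower. ring.
Qed.

Lemma Y_repr n : BesselY (nuf n) = fun x => - BesselJ (- nuf n) x / sin (nuf n * PI).
Proof.
  apply FunctionalExtensionality.functional_extensionality. intros x.
  unfold BesselY. rewrite (proj1 (trig_nu n)). field. apply trig_nu.
Qed.

Lemma G_formula n z : 0 < z -> PSeries (aa n) ((z/2)^2) <> 0 ->
  G (nuf n) z = - nuf n + (z * z / 2) * PSeries (PS_derive (aa n)) ((z/2)^2) / PSeries (aa n) ((z/2)^2).
Proof.
  intros Hz HP.
  set (mu := - nuf n). set (s := sin (nuf n * PI)).
  assert (Hs : s <> 0) by apply trig_nu.
  set (E := fun x => exp (mu * ln (x/2))).
  set (Q := fun x => PSeries (aa n) ((x/2)^2)).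
  set (P := PSeries (aa n) ((z/2)^2)). set (P' := PSeries (PS_derive (aa n)) ((z/2)^2)).
  assert (HE : is_derive E z (mu * / z * E z)).
  { unfold E. auto_derive. lra. unfold Rdiv. field. lra. }
  assert (HQ : is_derive Q z (z / 2 * P')).
  { unfold Q. apply (is_derive_comp (PSeries (aa n)) (fun x => (x/2)^2) z).
    apply is_derive_PSeries. rewrite aa_radius. simpl. auto.
    auto_derive. auto. field. }
  assert (HEQ : is_derive (fun x => E x * Q x) z (mu * / z * E z * Q z + E z * (z / 2 * P'))).
  { apply (is_derive_mult E Q z _ _ HE HQ). intros; apply Rmult_comm. }
  assert (HY : is_derive (BesselY (nuf n)) z (- (mu * / z * E z * Q z + E z * (z / 2 * P')) / s)).
  { rewrite Y_repr. fold s.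
    apply is_derive_ext_loc with (fun x => - (E x * Q x) / s).
    - exists (mkposreal z Hz). intros t Ht. change (Rabs (t - z) < z) in Ht.
      apply Rabs_def2 in Ht. cbv beta. unfold mu, E, Q. rewrite J_repr by lra. reflexivity.
    - apply is_derive_ext with (fun x => (- / s) * (E x * Q x)).
      { intros t. change (- / s * (E t * Q t) = - (E t * Q t) / s :> R). field. auto. }
      replace (- (mu * / z * E z * Q z + E z * (z / 2 * P')) / s) with
        ((- / s) * (mu * / z * E z * Q z + E z * (z / 2 * P'))) by (field; repeat split; auto; lra).
      apply is_derive_scal. exact HEQ. }
  unfold G. rewrite (is_derive_unique _ _ _ HY).
  rewrite Y_repr. fold s. rewrite J_repr by lra. fold mu.
  change (exp (mu * ln (z / 2))) with (E z). change (PSeries (aa n) ((z / 2) ^ 2)) with P.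
  change (Q z) with P.
  assert (HEz : E z <> 0) by (unfold E; apply Rgt_not_eq, exp_pos).
  unfold mu. field. repeat split; auto. lra.
Qed.



Lemma abs_le_betw (x b : R) : Rabs x <= b -> - b <= x <= b.
Proof. intros H. assert (H1 := Rle_abs x). assert (H2 := Rle_abs (- x)). rewrite Rabs_Ropp in H2. lra. Qed.

Lemma mul_abs_bound (a e M E : R) : 0 <= a <= M -> - E <= e <= E -> a * e <= M * E /\ - (M * E) <= a * e.
Proof. intros. split; nra. Qed.

Lemma final_arith (y A c1 c2 eT eU rho : R) :
  0 < y -> 100 + 100 * y + 1000 * y ^ 2 + 1000 * y ^ 3 <= A ->
  c1 = y / (A - 1) -> c2 = c1 * (y / (2 * (A - 2))) -> rho = 2 * y / (A - 1/2) ->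
  Rabs eT <= 2 * rho ^ 3 -> Rabs eU <= 6 * rho ^ 3 ->
  0 < 1 + c1 + c2 + eT /\
  2 * y / A - 2 * y / (3 * A ^ 2) <= 2 * (c1 + 2 * c2 + eU) / (1 + c1 + c2 + eT) /\
  2 * (c1 + 2 * c2 + eU) / (1 + c1 + c2 + eT) <= 2 * y / A + 14 * y / (3 * A ^ 2).
Proof.
  intros Hy HA Hc1 Hc2 Hr HeT HeU.
  assert (Hy2 : 0 < y ^ 2) by (apply pow_lt; lra).
  assert (Hy3 : 0 < y ^ 3) by (apply pow_lt; lra).
  assert (HA10 : 100 <= A) by lra.
  set (w := / A).
  assert (Hw : 0 < w) by (unfold w; apply Rinv_0_lt_compat; lra).
  assert (HwA : w * A = 1) by (unfold w; field; lra).
  assert (Hw10 : w <= 1/100) by (unfold w; apply Rinv_le_contravar in HA10; lra).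
  assert (Hrho0 : 0 <= rho) by (rewrite Hr; apply Rmult_le_pos; [lra | left; apply Rinv_0_lt_compat; lra]).
  assert (Hrho : rho <= 4 * y * w).
  { rewrite Hr. unfold w. apply Rmult_le_reg_r with (A * (A - 1/2)). nra.
    field_simplify; try lra; try nra. }
  assert (Hrho3 : rho ^ 3 <= 64 * y ^ 3 * w ^ 3).
  { replace (64 * y ^ 3 * w ^ 3) with ((4 * y * w) ^ 3) by ring. apply pow_incr. lra. }
  assert (Hyw : y * w <= 1/100).
  { apply Rmult_le_reg_r with A. lra. replace (y * w * A) with y by (rewrite Rmult_assoc, HwA; ring).
    nra. }
  assert (Hy2w : y ^ 2 * w <= 1/1000).
  { apply Rmult_le_reg_r with A. lra. replace (y ^ 2 * w * A) with (y ^ 2) by (rewrite Rmult_assoc, HwA; ring).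
    nra. }
  assert (Hy3w : y ^ 3 * w <= 1/1000).
  { apply Rmult_le_reg_r with A. lra. replace (y ^ 3 * w * A) with (y ^ 3) by (rewrite Rmult_assoc, HwA; ring).
    nra. }
  assert (Hc1p : 0 < c1) by (rewrite Hc1; apply Rdiv_lt_0_compat; lra).
  assert (Hc2p : 0 < c2) by (rewrite Hc2; apply Rmult_lt_0_compat; auto; apply Rdiv_lt_0_compat; lra).
  apply abs_le_betw in HeT. apply abs_le_betw in HeU.
  assert (Hsm : y ^ 3 * w ^ 3 <= 1/1000000).
  { assert (y ^ 3 * w ^ 3 = (y * w) ^ 3) by ring.
    assert ((y * w) ^ 3 <= (1/100) ^ 3) by (apply pow_incr; nra). nra. }
  set (T := 1 + c1 + c2 + eT).
  assert (HT : 0 < T) by (unfold T; nra).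
  split; auto.
  assert (HD : 2 * c1 + 4 * c2 - 2 * y * w * (1 + c1 + c2) =
               2 * y / (A * (A - 1)) + (4 * y ^ 2 - y ^ 3) / (A * (A - 1) * (A - 2))).
  { rewrite Hc2, Hc1. unfold w. field. repeat split; lra. }
  assert (HX1l : 2 * y * w ^ 2 <= 2 * y / (A * (A - 1))).
  { unfold w. apply Rmult_le_reg_r with (A ^ 2 * (A - 1)). nra.
    field_simplify; try lra; try nra. }
  assert (HX1u : 2 * y / (A * (A - 1)) <= 2 * y * w ^ 2 + 4 * y * w ^ 3).
  { unfold w. apply Rmult_le_reg_r with (A ^ 3 * (A - 1)). nra.
    field_simplify; try lra; try nra. }
  assert (HX2 : 0 <= y ^ 2 / (A * (A - 1) * (A - 2)) <= 4 * y ^ 2 * w ^ 3).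
  { split. unfold Rdiv; apply Rmult_le_pos; [nra | left; apply Rinv_0_lt_compat; nra].
    unfold w. apply Rmult_le_reg_r with (A ^ 3 * (A - 1) * (A - 2)). nra.
    field_simplify; try lra; try nra. }
  assert (HX3 : 0 <= y ^ 3 / (A * (A - 1) * (A - 2)) <= 4 * y ^ 3 * w ^ 3).
  { split. unfold Rdiv; apply Rmult_le_pos; [nra | left; apply Rinv_0_lt_compat; nra].
    unfold w. apply Rmult_le_reg_r with (A ^ 3 * (A - 1) * (A - 2)). nra.
    field_simplify; try lra. assert (0 <= 3*A^2 - 12*A + 8) by nra. nra. }
  assert (HD' : 2 * c1 + 4 * c2 - 2 * y * w * (1 + c1 + c2) =
               2 * y / (A * (A - 1)) + 4 * (y ^ 2 / (A * (A - 1) * (A - 2))) - y ^ 3 / (A * (A - 1) * (A - 2))).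
  { rewrite HD. unfold Rdiv. ring. }
  replace (2 * y / A) with (2 * y * w) by (unfold w; field; lra).
  replace (2 * y / (3 * A ^ 2)) with (2 / 3 * y * w ^ 2) by (unfold w; field; lra).
  replace (14 * y / (3 * A ^ 2)) with (14 / 3 * y * w ^ 2) by (unfold w; field; lra).
  assert (Hpw : 0 < y * w ^ 2) by (apply Rmult_lt_0_compat; [lra | apply pow_lt; lra]).
  assert (E3 : y ^ 3 * w ^ 3 <= 1/1000 * (y * w ^ 2)).
  { replace (y ^ 3 * w ^ 3) with ((y ^ 2 * w) * (y * w ^ 2)) by ring.
    apply Rmult_le_compat_r; lra. }
  assert (E4 : y * w * (y ^ 3 * w ^ 3) <= 1/100000 * (y * w ^ 2)).
  { replace (y * w * (y ^ 3 * w ^ 3)) with (((y ^ 3 * w) * w) * (y * w ^ 2)) by ring.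
    apply Rmult_le_compat_r. lra.
    assert (0 <= y ^ 3 * w) by (apply Rmult_le_pos; lra).
    replace (1/100000) with ((1/1000) * (1/100)) by field.
    apply Rmult_le_compat; lra. }
  assert (E2 : y ^ 2 * w ^ 3 <= 1/100 * (y * w ^ 2)).
  { replace (y ^ 2 * w ^ 3) with ((y * w) * (y * w ^ 2)) by ring.
    apply Rmult_le_compat_r; lra. }
  assert (E1 : y * w ^ 3 <= 1/100 * (y * w ^ 2)).
  { replace (y * w ^ 3) with (w * (y * w ^ 2)) by ring.
    apply Rmult_le_compat_r; lra. }
  assert (HeT' : - (128 * (y ^ 3 * w ^ 3)) <= eT <= 128 * (y ^ 3 * w ^ 3)) by lra.
  assert (HeU' : - (384 * (y ^ 3 * w ^ 3)) <= eU <= 384 * (y ^ 3 * w ^ 3)) by lra.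
  assert (H1 : y * w ^ 2 <= y * w ^ 2 * (1 + c1 + c2)).
  { rewrite <- (Rmult_1_r (y * w ^ 2)) at 1. apply Rmult_le_compat_l; lra. }
  assert (Hyw0 : 0 < y * w) by (apply Rmult_lt_0_compat; lra).
  assert (Hyw2 : y * w ^ 2 <= 1/100 * (y * w)).
  { replace (y * w ^ 2) with (w * (y * w)) by ring. apply Rmult_le_compat_r; lra. }
  split.
  - apply Rmult_le_reg_r with T; auto.
    replace (2 * (c1 + 2 * c2 + eU) / T * T) with (2 * (c1 + 2 * c2 + eU)) by (field; lra).
    unfold T.
    assert (H2 : (2 * y * w - 2 / 3 * y * w ^ 2) * eT <= (2 * (y * w)) * (128 * (y ^ 3 * w ^ 3))).
    { apply mul_abs_bound; lra. }
    lra.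
  - apply Rmult_le_reg_r with T; auto.
    replace (2 * (c1 + 2 * c2 + eU) / T * T) with (2 * (c1 + 2 * c2 + eU)) by (field; lra).
    unfold T.
    assert (H2 : - ((7 * (y * w)) * (128 * (y ^ 3 * w ^ 3))) <= (2 * y * w + 14 / 3 * y * w ^ 2) * eT).
    { apply mul_abs_bound; lra. }
    lra.
Qed.


Lemma geo_bound (d : nat -> R) (M q : R) : 0 <= q < 1 ->
  (forall k, Rabs (d k) <= M * q ^ k) -> ex_series d /\ Rabs (Series d) <= M / (1 - q).
Proof.
  intros Hq Hd.
  assert (Hg : is_series (fun k => M * q ^ k) (M / (1 - q))).
  { unfold Rdiv. apply (is_series_scal_l M (fun k => q ^ k) (/ (1 - q))).
    apply is_series_geom. rewrite Rabs_pos_eq; lra. }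
  assert (Hex : ex_series (fun k => M * q ^ k)) by (eexists; exact Hg).
  assert (Habs : ex_series (fun k => Rabs (d k))).
  { apply (@ex_series_le R_AbsRing R_CompleteNormedModule) with (fun k => M * q ^ k); auto.
    intros k. change (norm (Rabs (d k))) with (Rabs (Rabs (d k))). rewrite Rabs_Rabsolu. auto. }
  split.
  - apply (@ex_series_le R_AbsRing R_CompleteNormedModule) with (fun k => M * q ^ k); auto.
  - apply Rle_trans with (Series (fun k => Rabs (d k))). apply Series_Rabs; auto.
    rewrite <- (is_series_unique _ _ Hg). apply Series_le; auto.
    intros k. split; auto. apply Rabs_pos.
Qed.

Lemma series_split3 (c : nat -> R) : ex_series c ->
  Series c = c 0%nat + c 1%nat + c 2%nat + Series (fun k => c (S (S (S k)))).
Proof.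
  intros H. rewrite Series_incr_1 by auto.
  rewrite Series_incr_1 by (apply (ex_series_incr_1 c); auto).
  rewrite Series_incr_1 by (apply (ex_series_incr_1 (fun k => c (S k))); apply (ex_series_incr_1 c); auto).
  ring.
Qed.

Definition rr (n : nat) (y : R) (k : nat) : R := - y / (xk n k * INR (S k)).
Fixpoint cc (n : nat) (y : R) (k : nat) : R :=
  match k with O => 1 | S k => cc n y k * rr n y k end.

Lemma b_eq n y k : aa n k * y ^ k = aa n 0 * cc n y k.
Proof.
  induction k as [|k IH]. simpl. ring.
  rewrite aa_rec. change (cc n y (S k)) with (cc n y k * rr n y k).
  replace (aa n 0 * (cc n y k * rr n y k)) with ((aa n 0 * cc n y k) * rr n y k) by ring.
  rewrite <- IH. unfold rr. simpl pow.
  assert (H1 := xk_neq0 n k). assert (H2 : INR (S k) <> 0) by (apply not_0_INR; lia).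
  field. auto.
Qed.

Lemma rr_bound n y k : (2 <= n)%nat -> 0 <= y -> Rabs (rr n y k) <= 2 * y / (INR n - 1).
Proof.
  intros Hn Hy.
  assert (Hn' : 2 <= INR n) by (replace 2 with (INR 2) by (simpl; ring); apply le_INR; auto).
  assert (Hi : 1 <= INR (S k)) by (replace 1 with (INR 1) by (simpl; ring); apply le_INR; lia).
  assert (Hx : xk n k = INR (S k) - INR n + 1/2) by (unfold xk, nuf; rewrite S_INR; ring).
  assert (Hprod : (INR n - 1) / 2 <= Rabs (xk n k) * INR (S k)).
  { rewrite Hx. destruct (le_lt_dec (S k) (n - 1)) as [h|h].
    - assert (INR (S k) <= INR n - 1).
      { replace (INR n - 1) with (INR (n - 1)) by (rewrite minus_INR by lia; simpl; ring).
        apply le_INR; lia. }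
      rewrite Rabs_left by lra. nra.
    - assert (INR n <= INR (S k)) by (apply le_INR; lia).
      rewrite Rabs_pos_eq by lra. nra. }
  replace (2 * y / (INR n - 1)) with (y * (2 * / (INR n - 1))) by (field; lra).
  unfold rr. unfold Rdiv. rewrite Rabs_mult, Rabs_Ropp, (Rabs_pos_eq y) by auto.
  rewrite Rabs_inv, Rabs_mult, (Rabs_pos_eq (INR (S k))) by lra.
  apply Rmult_le_compat_l; auto.
  replace (2 * / (INR n - 1)) with (/ ((INR n - 1) / 2)) by (field; lra).
  apply Rinv_le_contravar. lra. auto.
Qed.

Lemma cc_bound n y k : (2 <= n)%nat -> 0 <= y -> Rabs (cc n y k) <= (2 * y / (INR n - 1)) ^ k.
Proof.
  intros Hn Hy. induction k as [|k IH].
  - simpl. rewrite Rabs_R1. lra.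
  - simpl. rewrite Rabs_mult. rewrite Rmult_comm.
    apply Rmult_le_compat; try apply Rabs_pos; auto. apply rr_bound; auto.
Qed.

Lemma INR_le_pow2 k : INR (S (S (S k))) <= 3 * 2 ^ k.
Proof.
  induction k as [|k IH]. simpl. lra.
  rewrite S_INR. simpl. simpl in IH. assert (1 <= 2 ^ k) by (apply pow_R1_Rle; lra). lra.
Qed.


Lemma series_split2 (c : nat -> R) : ex_series c ->
  Series c = c 0%nat + c 1%nat + Series (fun k => c (S (S k))).
Proof.
  intros H. rewrite Series_incr_1 by auto.
  rewrite Series_incr_1 by (apply (ex_series_incr_1 c); auto).
  ring.
Qed.

Lemma INR_S_le_pow2 k : INR (S k) <= 2 ^ k.
Proof.
  induction k as [|k IH]. simpl. lra.
  rewrite S_INR. change (2 ^ S k) with (2 * 2 ^ k). assert (1 <= 2 ^ k) by (apply pow_R1_Rle; lra). lra.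
Qed.

Lemma third_ineq (y A : R) : 0 < y -> 100 + 100 * y <= A ->
  - A + 2 * y / A + 14 * y / (3 * A ^ 2) < 0.
Proof.
  intros Hy HA.
  assert (HA0 : 0 < A) by lra.
  assert (H1 : 2 * y / A <= 1/50).
  { apply Rmult_le_reg_r with A. lra. field_simplify; lra. }
  assert (H2 : 14 * y / (3 * A ^ 2) <= 1).
  { apply Rmult_le_reg_r with (3 * A ^ 2). nra. field_simplify; try lra. nra. }
  lra.
Qed.

Lemma main_n (z : R) (n : nat) : 0 < z -> (2 <= n)%nat ->
  100 + 100 * ((z/2)^2) + 1000 * ((z/2)^2) ^ 2 + 1000 * ((z/2)^2) ^ 3 <= nuf n ->
  - nuf n + 2 * ((z/2)^2) / nuf n - 2 * ((z/2)^2) / (3 * nuf n ^ 2) <= G (nuf n) z /\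
  G (nuf n) z <= - nuf n + 2 * ((z/2)^2) / nuf n + 14 * ((z/2)^2) / (3 * nuf n ^ 2).
Proof.
  intros Hz Hn HA.
  set (y := (z/2)^2) in *.
  assert (Hy : 0 < y) by (unfold y; apply pow_lt; lra).
  set (A := nuf n) in *.
  assert (HAn : A - 1/2 = INR n - 1) by (unfold A, nuf; field).
  set (rho := 2 * y / (INR n - 1)).
  assert (Hy2 : 0 < y ^ 2) by (apply pow_lt; lra).
  assert (Hy3 : 0 < y ^ 3) by (apply pow_lt; lra).
  assert (Hn1 : 100 * y < INR n - 1) by lra.
  assert (Hrho0 : 0 <= rho) by (unfold rho; apply Rmult_le_pos; [lra | left; apply Rinv_0_lt_compat; lra]).
  assert (Hrho1 : rho <= 1/50).
  { unfold rho. apply Rmult_le_reg_r with (INR n - 1). lra. field_simplify; lra. }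
  set (c := cc n y).
  assert (Hc : forall k, Rabs (c k) <= rho ^ k) by (intros k; apply cc_bound; lra || auto).
  assert (HexT : ex_series c).
  { apply (proj1 (geo_bound c 1 rho ltac:(lra) ltac:(intros k; rewrite Rmult_1_l; auto))). }
  destruct (geo_bound (fun k => c (S (S (S k)))) (rho ^ 3) rho ltac:(lra)) as [_ HeT].
  { intros k. replace (rho ^ 3 * rho ^ k) with (rho ^ (S (S (S k)))) by (simpl; ring). auto. }
  set (eT := Series (fun k => c (S (S (S k))))) in *.
  assert (HeT2 : Rabs eT <= 2 * rho ^ 3).
  { apply Rle_trans with (1 := HeT). apply Rmult_le_reg_r with (1 - rho). lra.
    field_simplify; try lra. assert (0 <= rho ^ 4) by (apply pow_le; lra). nra. }
  assert (HT : Series c = 1 + c 1%nat + c 2%nat + eT).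
  { rewrite series_split3 by auto. reflexivity. }
  set (d := fun k => INR (S k) * c (S k)).
  destruct (geo_bound d rho (2 * rho) ltac:(lra)) as [HexU _].
  { intros k. unfold d. rewrite Rabs_mult, Rabs_pos_eq by apply pos_INR.
    replace (rho * (2 * rho) ^ k) with (2 ^ k * rho ^ (S k)) by (simpl; rewrite Rpow_mult_distr; ring).
    apply Rmult_le_compat; auto. apply pos_INR. apply Rabs_pos. apply INR_S_le_pow2. }
  destruct (geo_bound (fun k => d (S (S k))) (3 * rho ^ 3) (2 * rho) ltac:(lra)) as [_ HeU].
  { intros k. unfold d. rewrite Rabs_mult, Rabs_pos_eq by apply pos_INR.
    replace (3 * rho ^ 3 * (2 * rho) ^ k) with ((3 * 2 ^ k) * rho ^ (S (S (S k)))) by (simpl; rewrite Rpow_mult_distr; ring).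
    apply Rmult_le_compat; auto. apply pos_INR. apply Rabs_pos. apply INR_le_pow2. }
  set (eU := Series (fun k => d (S (S k)))) in *.
  assert (HeU2 : Rabs eU <= 6 * rho ^ 3).
  { apply Rle_trans with (1 := HeU). apply Rmult_le_reg_r with (1 - 2 * rho). lra.
    field_simplify; try lra. assert (0 <= rho ^ 4) by (apply pow_le; lra). nra. }
  assert (HU : Series d = c 1%nat + 2 * c 2%nat + eU).
  { rewrite series_split2 by auto. unfold d at 1 2. simpl INR. fold eU. ring. }
  assert (HA1 : A - 1 <> 0) by lra.
  assert (HA2 : A - 2 <> 0) by lra.
  assert (Hc1 : c 1%nat = y / (A - 1)).
  { unfold c. simpl. unfold rr, xk. fold A. simpl. field. lra. }
  assert (Hc2 : c 2%nat = c 1%nat * (y / (2 * (A - 2)))).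
  { unfold c. change (cc n y 2) with (cc n y 1 * rr n y 1). unfold rr, xk. fold A. simpl. field. lra. }
  destruct (final_arith y A (c 1%nat) (c 2%nat) eT eU rho Hy HA Hc1 Hc2) as [HTp [Hlo Hhi]].
  { unfold rho. rewrite HAn. reflexivity. }
  all: auto.
  set (a0 := aa n 0).
  assert (Ha0 : a0 <> 0) by apply aa_neq0.
  assert (HP : PSeries (aa n) y = a0 * Series c).
  { unfold PSeries. rewrite <- Series_scal_l. apply Series_ext. intros k. apply b_eq. }
  assert (HP' : y * PSeries (PS_derive (aa n)) y = a0 * Series d).
  { unfold PSeries. rewrite <- !Series_scal_l. apply Series_ext. intros k.
    unfold d, PS_derive, a0, c.
    replace (aa n 0 * (INR (S k) * cc n y (S k))) with (INR (S k) * (aa n 0 * cc n y (S k))) by ring.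
    rewrite <- b_eq. simpl pow. ring. }
  assert (HPn : PSeries (aa n) y <> 0).
  { rewrite HP, HT. apply Rmult_integral_contrapositive_currified; lra. }
  assert (HG : G A z = - A + 2 * (c 1%nat + 2 * c 2%nat + eU) / (1 + c 1%nat + c 2%nat + eT)).
  { unfold A. rewrite G_formula by auto. fold A. fold y.
    rewrite <- HT, <- HU.
    replace (z * z / 2 * PSeries (PS_derive (aa n)) y / PSeries (aa n) y)
      with (2 * (y * PSeries (PS_derive (aa n)) y) / PSeries (aa n) y)
      by (unfold y; field; auto).
    rewrite HP', HP. field. split; auto. rewrite HT. lra. }
  rewrite HG. split; lra.
Qed.

Theorem lemmaE3 (z : R) (hz : 0 < z) :
  exists (C : R) (N : nat), forall n : nat, (N <= n)%nat ->
    let nu := INR n - 1 / 2 in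
    - nu + z ^ 2 / (2 * nu) - z ^ 2 / (6 * nu ^ 2) - C / nu ^ 3 <= G nu z /\
    G nu z <= - nu + z ^ 2 / (2 * nu) + 7 * z ^ 2 / (6 * nu ^ 2) + C / nu ^ 3 /\
    - nu + z ^ 2 / (2 * nu) + 7 * z ^ 2 / (6 * nu ^ 2) + C / nu ^ 3 < 0.
Proof.
  set (y := (z/2)^2).
  assert (Hy : 0 < y) by (unfold y; apply pow_lt; lra).
  set (K := 100 + 100 * y + 1000 * y ^ 2 + 1000 * y ^ 3).
  assert (HK : 0 < K) by (unfold K; assert (0 < y^2) by (apply pow_lt; lra); assert (0 < y^3) by (apply pow_lt; lra); lra).
  destruct (archimed K) as [Hup1 Hup2].
  assert (Hup0 : (0 <= up K)%Z) by (apply le_IZR; lra).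
  exists 0, (Z.to_nat (up K) + 2)%nat. intros n Hn nu.
  assert (HnK : K <= nuf n).
  { unfold nuf. apply le_INR in Hn. rewrite plus_INR, INR_IZR_INZ, Z2Nat.id in Hn by auto.
    simpl in Hn. lra. }
  assert (Hn2 : (2 <= n)%nat) by lia.
  destruct (main_n z n hz Hn2 HnK) as [Hlo Hhi].
  fold y in Hlo, Hhi.
  change nu with (nuf n).
  set (A := nuf n) in *.
  assert (HA : 100 + 100 * y <= A).
  { unfold K in HnK. assert (0 < y^2) by (apply pow_lt; lra); assert (0 < y^3) by (apply pow_lt; lra). lra. }
  assert (HA0 : 0 < A) by lra.
  assert (Hz2 : z ^ 2 = 4 * y) by (unfold y; field).
  rewrite Hz2.
  replace (4 * y / (2 * A)) with (2 * y / A) by (field; lra).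
  replace (4 * y / (6 * A ^ 2)) with (2 * y / (3 * A ^ 2)) by (field; lra).
  replace (7 * (4 * y) / (6 * A ^ 2)) with (14 * y / (3 * A ^ 2)) by (field; lra).
  replace (0 / A ^ 3) with 0 by (field; lra).
  assert (H3 := third_ineq y A Hy HA).
  split; [lra | split; lra].
Qed.
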